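(* Let $a/b$ be a rational number in lowest terms with $b\geq1$. Suppose $\zeta>0$ satisfies $\zeta\in\mathscr{L}$ and $\zeta^{a/b}\in\mathscr{L}$. Then for every $\eta>0$ the inequality $|q^b\zeta^a-p^b|\leq q^{-\eta}$ has a solution in coprime integers $p,q$ with $q\geq1$. Moreover, for fixed $\eta>b$, if $(p,q)$ is such a solution with $q$ sufficiently large, then $p^b/q^b$ is a convergent of the continued fraction expansion of $\zeta^a$.
   Context: $\mathscr{L}$ is the set of Liouville numbers (real irrational $\zeta$ such that for every $\eta>0$ there are infinitely many rationals $y/x$, $x\geq1$, with $|\zeta-y/x|\leq x^{-\eta}$). *)

(* Defs.v *)
From Stdlib Require Export Reals ZArith List.
Open Scope R_scope.

Definition irrational (z : R) : Prop :=
  forall p q : Z, q <> 0%Z -> z <> IZR p / IZR q.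

(* Liouville numbers: real irrational z such that for every eta > 0 there are
   infinitely many rationals y/x (x >= 1) with |z - y/x| <= x^(-eta).
   "Infinitely many rationals" = the set of such values y/x is not contained
   in any finite list of reals. *)
Definition Liouville (z : R) : Prop :=
  irrational z /\
  forall eta : R, 0 < eta ->
    forall l : list R, exists y x : Z,
      (1 <= x)%Z /\
      Rabs (z - IZR y / IZR x) <= Rpower (IZR x) (- eta) /\
      ~ In (IZR y / IZR x) l.

(* Regular continued fraction expansion of a real x:
   complete quotients x_0 = x, x_{n+1} = 1 / frac(x_n);
   partial quotients a_n = floor(x_n)  (Int_part = floor). *)
Fixpoint cf_rem (x : R) (n : nat) : R :=
  match n with
  | O => x
  | S m => / frac_part (cf_rem x m)
  end.

Definition cf_digit (x : R) (n : nat) : Z := Int_part (cf_rem x n).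

(* (p_n, q_n, p_{n-1}, q_{n-1}) with p_{-1} = 1, q_{-1} = 0,
   p_n = a_n p_{n-1} + p_{n-2}, q_n = a_n q_{n-1} + q_{n-2}. *)
Fixpoint cf_pq (x : R) (n : nat) : Z * Z * Z * Z :=
  match n with
  | O => (cf_digit x 0, 1%Z, 1%Z, 0%Z)
  | S m =>
      let '(p, q, p', q') := cf_pq x m in
      let a := cf_digit x (S m) in
      ((a * p + p')%Z, (a * q + q')%Z, p, q)
  end.

Definition cf_num (x : R) (n : nat) : Z := let '(p, _, _, _) := cf_pq x n in p.
Definition cf_den (x : R) (n : nat) : Z := let '(_, q, _, _) := cf_pq x n in q.

Definition is_convergent (x r : R) : Prop :=
  exists n : nat, r = IZR (cf_num x n) / IZR (cf_den x n).

(* Main.v *)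
Require Import Defs.
From Stdlib Require Import Reals ZArith List Lra Lia.
Open Scope R_scope.

Lemma irr_step z : irrational z ->
  irrational (/ frac_part z) /\ 0 < frac_part z < 1.
Proof.
  intros Hz.
  assert (Hf : frac_part z <> 0).
  { intro H0. unfold frac_part in H0. apply (Hz (Int_part z) 1%Z); [lia|].
    replace (IZR 1) with 1 by reflexivity. lra. }
  destruct (base_fp z) as [H1 H2].
  assert (Hp : 0 < frac_part z < 1) by lra.
  split; [|exact Hp].
  intros p q Hq Heq.
  assert (Hpos : 0 < / frac_part z) by (apply Rinv_0_lt_compat; lra).
  assert (Hp0 : IZR p <> 0).
  { intro E. rewrite E in Heq. unfold Rdiv in Heq. rewrite Rmult_0_l in Heq. lra. }
  assert (Hq' : IZR q <> 0) by (apply not_0_IZR; exact Hq).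
  apply (Hz (Int_part z * p + q)%Z p).
  { intro E; subst; apply Hp0; reflexivity. }
  assert (Ef : frac_part z = IZR q / IZR p).
  { rewrite <- (Rinv_inv (frac_part z)). rewrite Heq. field. split; auto. }
  unfold frac_part in Ef. rewrite plus_IZR, mult_IZR.
  set (k := IZR (Int_part z)) in *.
  replace z with (k + IZR q / IZR p) by lra.
  field. auto.
Qed.

Lemma rem_facts x : irrational x -> forall n,
  irrational (cf_rem x n) /\
  cf_rem x n = IZR (cf_digit x n) + / cf_rem x (S n) /\ 1 < cf_rem x (S n).
Proof.
  intros Hx.
  assert (Hi : forall n, irrational (cf_rem x n)).
  { induction n; simpl; auto. apply irr_step; auto. }
  intros n. split; auto.
  destruct (irr_step _ (Hi n)) as [_ Hp].
  simpl. unfold cf_digit. split.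
  - rewrite Rinv_inv. unfold frac_part. lra.
  - rewrite <- Rinv_1. apply Rinv_lt_contravar; lra.
Qed.

Lemma digit_ge1 x : irrational x -> forall n, (1 <= cf_digit x (S n))%Z.
Proof.
  intros Hx n. destruct (rem_facts x Hx n) as [_ [_ H]].
  unfold cf_digit, Int_part. destruct (archimed (cf_rem x (S n))) as [A B].
  assert (1 < IZR (up (cf_rem x (S n)))) by lra.
  assert (1 < up (cf_rem x (S n)))%Z by (apply lt_IZR; exact H0). lia.
Qed.

Definition Inv x n (T : Z*Z*Z*Z) : Prop :=
  let '(p,q,p',q') := T in
  (p*q' - p'*q = 1 \/ p*q' - p'*q = -1)%Z /\ (1 <= q)%Z /\ (0 <= q')%Z /\
  (Z.of_nat n <= q)%Z /\ ((1 <= n)%nat -> (1 <= q')%Z) /\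
  x = (IZR p * cf_rem x (S n) + IZR p') / (IZR q * cf_rem x (S n) + IZR q').

Lemma inv_all x : irrational x -> forall n, Inv x n (cf_pq x n).
Proof.
  intros Hx n. induction n.
  - change (cf_pq x 0) with (cf_digit x 0, 1%Z, 1%Z, 0%Z). unfold Inv. destruct (rem_facts x Hx 0) as [_ [E H]]. change (cf_rem x 0) with x in E.
    repeat split; try lia.
    replace (IZR 1) with 1 by reflexivity. replace (IZR 0) with 0 by reflexivity.
    set (X := cf_rem x 1) in *. set (a0 := IZR (cf_digit x 0)) in *.
    rewrite E at 1. field. lra.
  - simpl cf_pq. destruct (cf_pq x n) as [[[p q] p'] q'] eqn:ET.
    unfold Inv in IHn. destruct IHn as (D & Q1 & Q2 & Q3 & Q4 & E).
    pose proof (digit_ge1 x Hx n) as Ha.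
    set (a := cf_digit x (S n)) in *.
    unfold Inv. destruct (rem_facts x Hx (S n)) as [_ [EX HY]].
    fold a in EX.
    split; [|split; [|split; [|split; [|split]]]].
    + replace ((a*p+p')*q - p*(a*q+q'))%Z with (-(p*q'-p'*q))%Z by ring. lia.
    + nia.
    + lia.
    + destruct n; [simpl; nia|].
      specialize (Q4 ltac:(lia)). rewrite Nat2Z.inj_succ in *. nia.
    + intros; lia.
    + set (Y := cf_rem x (S (S n))) in *. set (X := cf_rem x (S n)) in *.
      assert (HX : 1 < X). { destruct (rem_facts x Hx n) as [_ [_ H]]. exact H. }
      assert (1 <= IZR q) by (apply IZR_le; lia).
      assert (0 <= IZR q') by (apply IZR_le; lia).
      assert (1 <= IZR a) by (apply IZR_le; lia).
      rewrite E at 1. rewrite EX. rewrite !plus_IZR, !mult_IZR.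
      assert (0 < / Y) by (apply Rinv_0_lt_compat; lra).
      field. split; [|lra]. 
      assert (0 < IZR a * IZR q) by nra. apply Rgt_not_eq. nra.
Qed.

Lemma pq_S x n : exists P Q, cf_pq x (S n) = (P,Q,cf_num x n, cf_den x n) /\
  cf_num x (S n) = P /\ cf_den x (S n) = Q.
Proof.
  unfold cf_num, cf_den. simpl cf_pq.
  destruct (cf_pq x n) as [[[p q] p'] q']. simpl.
  eexists; eexists; split; [reflexivity|split; reflexivity].
Qed.

Lemma den_ge x : irrational x -> forall n, (Z.of_nat n <= cf_den x n)%Z /\ (1 <= cf_den x n)%Z.
Proof.
  intros Hx n. pose proof (inv_all x Hx n) as I. unfold cf_den.
  destruct (cf_pq x n) as [[[p q] p'] q']. unfold Inv in I. lia.
Qed.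

Lemma bracket x : irrational x -> forall s, (1 <= s)%Z ->
  exists n, (cf_den x n <= s < cf_den x (S n))%Z.
Proof.
  intros Hx s Hs.
  assert (forall k, (s < cf_den x k)%Z -> exists n, (cf_den x n <= s < cf_den x (S n))%Z).
  { induction k; intros Hk.
    - assert (cf_den x 0 = 1%Z) by reflexivity. lia.
    - destruct (Z_le_gt_dec (cf_den x k) s).
      + exists k; lia.
      + apply IHk; lia. }
  apply (H (S (Z.to_nat s))). destruct (den_ge x Hx (S (Z.to_nat s))). lia.
Qed.

Lemma legendre x : irrational x -> forall r s, (1 <= s)%Z ->
  2 * IZR s * Rabs (IZR s * x - IZR r) < 1 ->
  exists n, IZR r / IZR s = IZR (cf_num x n) / IZR (cf_den x n).
Proof.
  intros Hx r s Hs Hlt.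
  destruct (bracket x Hx s Hs) as [n Hn].
  exists n.
  destruct (pq_S x n) as (P & Q & ET & EP & EQ).
  pose proof (inv_all x Hx (S n)) as I. rewrite ET in I. unfold Inv in I.
  rewrite EQ in Hn.
  set (p := cf_num x n) in *. set (q := cf_den x n) in *.
  destruct I as (Dd & Q1 & Q2 & _ & Q4 & E).
  specialize (Q4 ltac:(lia)).
  set (Y := cf_rem x (S (S n))) in *.
  assert (HY : 1 < Y). { destruct (rem_facts x Hx (S n)) as [_ [_ H]]. exact H. }
  set (d := (P * q - p * Q)%Z) in *.
  assert (Hdd : (d * d = 1)%Z) by (destruct Dd as [-> | ->]; reflexivity).
  set (u := (- d * (r * Q - s * P))%Z).
  set (v := (- d * (p * s - q * r))%Z).
  assert (Hr : (u * p + v * P = r)%Z).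
  { transitivity (r * (d * d))%Z; [unfold u, v, d; ring | rewrite Hdd; ring]. }
  assert (Hs' : (u * q + v * Q = s)%Z).
  { transitivity (s * (d * d))%Z; [unfold u, v, d; ring | rewrite Hdd; ring]. }
  set (en := IZR q * x - IZR p).
  set (en1 := IZR Q * x - IZR P).
  assert (HqR : 1 <= IZR q) by (apply IZR_le; lia).
  assert (HQR : 1 <= IZR Q) by (apply IZR_le; lia).
  set (Dn := IZR Q * Y + IZR q).
  assert (HD : 0 < Dn) by (unfold Dn; nra).
  assert (ExD : x * Dn = IZR P * Y + IZR p).
  { rewrite E at 1. unfold Dn. field. unfold Dn in HD; apply Rgt_not_eq; lra. }
  assert (Hdd' : IZR d * IZR d = 1) by (rewrite <- mult_IZR, Hdd; reflexivity).
  assert (Hdef : IZR d = IZR P * IZR q - IZR p * IZR Q)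
    by (unfold d; rewrite minus_IZR, !mult_IZR; reflexivity).
  assert (E1 : en * Dn = Y * IZR d).
  { unfold en. replace ((IZR q * x - IZR p) * Dn) with (IZR q * (x * Dn) - IZR p * Dn) by ring.
    rewrite ExD, Hdef. unfold Dn. ring. }
  assert (E2 : en1 * Dn = - IZR d).
  { unfold en1. replace ((IZR Q * x - IZR P) * Dn) with (IZR Q * (x * Dn) - IZR P * Dn) by ring.
    rewrite ExD, Hdef. unfold Dn. ring. }
  assert (Hprod : en * en1 < 0).
  { assert (en * en1 * (Dn * Dn) = - Y).
    { replace (en * en1 * (Dn * Dn)) with ((en * Dn) * (en1 * Dn)) by ring.
      rewrite E1, E2. replace (Y * IZR d * - IZR d) with (- Y * (IZR d * IZR d)) by ring.
      rewrite Hdd'. ring. }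
    assert (0 < Dn * Dn) by nra. nra. }
  assert (Hdec : IZR s * x - IZR r = IZR u * en + IZR v * en1).
  { rewrite <- Hr, <- Hs'. rewrite !plus_IZR, !mult_IZR. unfold en, en1. ring. }
  assert (Hbest : Rabs en <= Rabs (IZR s * x - IZR r)).
  { rewrite Hdec.
    clearbody u v.
    assert (Hu : u <> 0%Z).
    { intro Hu0. subst u. clear -Hs' Hn Q1 Hs. assert (v >= 1 \/ v <= 0)%Z as [|] by lia; nia. }
    assert (Huv : (u * v <= 0)%Z).
    { clear -Hs' Hn Q1 Q2 Hs Q4. destruct (Z_le_gt_dec u 0); destruct (Z_le_gt_dec v 0); nia. }
    assert (HuvR : IZR u * IZR v <= 0) by (rewrite <- mult_IZR; apply IZR_le; lia).
    assert (HAB : 0 <= (IZR u * en) * (IZR v * en1)) by nra.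
    assert (HA : Rabs en <= Rabs (IZR u * en)).
    { rewrite Rabs_mult. assert (1 <= Rabs (IZR u)).
      { rewrite <- abs_IZR. apply IZR_le. lia. }
      pose proof (Rabs_pos en). nra. }
    eapply Rle_trans; [exact HA|].
    destruct (Rcase_abs (IZR u * en)); destruct (Rcase_abs (IZR v * en1));
      try (rewrite (Rabs_left (IZR u * en)) by lra);
      try (rewrite (Rabs_right (IZR u * en)) by lra);
      unfold Rabs; destruct (Rcase_abs _); nra. }
  destruct (Z.eq_dec (r * q) (s * p)) as [Heq|Hne].
  - assert (IZR s <> 0) by (apply not_0_IZR; lia).
    assert (IZR q <> 0) by lra.
    apply (Rmult_eq_reg_r (IZR s * IZR q)); [|apply Rmult_integral_contrapositive; auto].
    field_simplify; auto.
    rewrite <- !mult_IZR. rewrite Heq. f_equal; ring.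
  - exfalso.
    assert (H1 : 1 <= Rabs (IZR (r * q - s * p))).
    { rewrite <- abs_IZR. apply IZR_le. lia. }
    assert (Hid : IZR (r * q - s * p) = IZR q * (IZR r - IZR s * x) + IZR s * en).
    { rewrite minus_IZR, !mult_IZR. unfold en. ring. }
    rewrite Hid in H1.
    pose proof (Rabs_triang (IZR q * (IZR r - IZR s * x)) (IZR s * en)).
    rewrite !Rabs_mult in H.
    rewrite (Rabs_right (IZR q)) in H by lra.
    assert (HsR : 1 <= IZR s) by (apply IZR_le; lia).
    assert (HqsR : IZR q <= IZR s) by (apply IZR_le; lia).
    rewrite (Rabs_right (IZR s)) in H by lra.
    replace (IZR r - IZR s * x) with (- (IZR s * x - IZR r)) in H by ring.
    rewrite Rabs_Ropp in H.
    replace (IZR r - IZR s * x) with (- (IZR s * x - IZR r)) in H1 by ring.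
    pose proof (Rabs_pos (IZR s * x - IZR r)). pose proof (Rabs_pos en).
    assert (IZR q * Rabs (IZR s * x - IZR r) <= IZR s * Rabs (IZR s * x - IZR r))
      by (apply Rmult_le_compat_r; lra).
    assert (IZR s * Rabs en <= IZR s * Rabs (IZR s * x - IZR r))
      by (apply Rmult_le_compat_l; lra).
    lra.
Qed.
Lemma powdiff n a c M : 1 <= M -> Rabs a <= M -> Rabs c <= M ->
  Rabs (a ^ n - c ^ n) <= INR n * M ^ n * Rabs (a - c).
Proof.
  intros HM Ha Hc. induction n.
  - simpl. replace (1 - 1) with 0 by ring. rewrite Rabs_R0. lra.
  - replace (a ^ S n - c ^ S n) with (a ^ n * (a - c) + c * (a ^ n - c ^ n)) by (simpl; ring).
    eapply Rle_trans; [apply Rabs_triang|]. rewrite !Rabs_mult.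
    rewrite <- RPow_abs.
    assert (Hn : Rabs a ^ n <= M ^ n) by (apply pow_incr; split; [apply Rabs_pos|auto]).
    assert (HMn : 1 <= M ^ n) by (apply pow_R1_Rle; auto).
    assert (HMn1 : M ^ n <= M ^ S n) by (simpl; nra).
    pose proof (Rabs_pos (a - c)). pose proof (Rabs_pos c).
    pose proof (Rabs_pos (a ^ n - c ^ n)). pose proof (pos_INR n).
    rewrite S_INR.
    assert (Rabs a ^ n * Rabs (a - c) <= M ^ S n * Rabs (a - c)) by
      (apply Rmult_le_compat_r; lra).
    assert (Rabs c * Rabs (a ^ n - c ^ n) <= M * (INR n * M ^ n * Rabs (a - c))).
    { apply Rmult_le_compat; auto. }
    replace (M * (INR n * M ^ n * Rabs (a - c))) with (INR n * M ^ S n * Rabs (a - c)) in H4 by (simpl; ring).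
    lra.
Qed.

Lemma pow2ge k : INR k <= 2 ^ k.
Proof.
  induction k; [simpl; lra|]. rewrite S_INR. change (2 ^ S k) with (2 * 2 ^ k).
  assert (1 <= 2 ^ k) by (apply pow_R1_Rle; lra). lra.
Qed.

Lemma pow_lt_base a c n : 0 <= a < c -> (1 <= n)%nat -> a ^ n < c ^ n.
Proof.
  intros H Hn. induction n; [lia|].
  destruct n; [simpl; lra|].
  specialize (IHn ltac:(lia)).
  replace (a ^ S (S n)) with (a * a ^ S n) by reflexivity.
  replace (c ^ S (S n)) with (c * c ^ S n) by reflexivity.
  assert (0 <= a ^ S n) by (apply pow_le; lra). nra.
Qed.

Lemma approx th : Liouville th -> forall n, (1 <= n)%nat ->
  exists p q, (2 <= q)%Z /\ Z.gcd p q = 1%Z /\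
    Rabs (th - IZR p / IZR q) <= / IZR q ^ n.
Proof.
  intros [Hirr HL] n Hn.
  assert (Hn0 : 0 < INR n) by (apply lt_0_INR; lia).
  destruct (HL (INR n) Hn0 (IZR (up th - 2) :: IZR (up th - 1) :: IZR (up th) :: nil)) as (y & x & Hx & Hb & Hnin).
  set (g := Z.gcd y x).
  assert (Hg : (0 < g)%Z).
  { pose proof (Z.gcd_nonneg y x). assert (g <> 0%Z).
    { intro G. apply Z.gcd_eq_0 in G. lia. } fold g in H. lia. }
  destruct (Z.gcd_divide_l y x) as [p Hp]. destruct (Z.gcd_divide_r y x) as [q Hq].
  fold g in Hp, Hq.
  assert (Hq1 : (1 <= q)%Z) by nia.
  assert (Hgcd : Z.gcd p q = 1%Z).
  { assert (p = y / g)%Z by (rewrite Hp; rewrite Z.div_mul; lia).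
    assert (q = x / g)%Z by (rewrite Hq; rewrite Z.div_mul; lia).
    subst p q. apply Z.gcd_div_gcd; [lia|reflexivity]. }
  assert (HgR : 0 < IZR g) by (apply IZR_lt; lia).
  assert (HqR : 1 <= IZR q) by (apply IZR_le; lia).
  assert (Hval : IZR y / IZR x = IZR p / IZR q).
  { rewrite Hp, Hq, !mult_IZR. field. lra. }
  assert (HxR : IZR q <= IZR x) by (apply IZR_le; nia).
  rewrite Rpower_Ropp in Hb. rewrite Rpower_pow in Hb by lra.
  assert (Hb' : / IZR x ^ n <= / IZR q ^ n).
  { apply Rinv_le_contravar; [apply pow_lt; lra|apply pow_incr; lra]. }
  assert (Hle1 : / IZR q ^ n <= 1).
  { rewrite <- Rinv_1. apply Rinv_le_contravar; [lra|apply pow_R1_Rle; lra]. }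
  rewrite Hval in Hb, Hnin.
  exists p, q. split; [|split; [auto|lra]].
  destruct (Z.eq_dec q 1) as [E|E]; [|lia].
  exfalso. apply Hnin. rewrite E in *.
  replace (IZR 1) with 1 in * by reflexivity.
  rewrite Rdiv_1_r in *.
  destruct (archimed th) as [A1 A2].
  assert (Rabs (th - IZR p) <= 1) by lra.
  pose proof (Rle_abs (th - IZR p)). pose proof (Rle_abs (- (th - IZR p))).
  rewrite Rabs_Ropp in H1.
  assert (up th - 3 < p)%Z by (apply lt_IZR; rewrite minus_IZR; lra).
  assert (p < up th + 1)%Z by (apply lt_IZR; rewrite plus_IZR; lra).
  destruct (Z.eq_dec p (up th)) as [->|]; [right; right; left; reflexivity|].
  destruct (Z.eq_dec p (up th - 1)) as [->|]; [right; left; reflexivity|].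
  left. f_equal. lia.
Qed.

Lemma theta_pow (a : Z) (b : nat) z : (1 <= b)%nat -> 0 < z ->
  Rpower z (IZR a / INR b) ^ b = powerRZ z a.
Proof.
  intros Hb Hz. rewrite <- Rpower_pow by (unfold Rpower; apply exp_pos).
  rewrite Rpower_mult. rewrite powerRZ_Rpower by auto. f_equal.
  field. apply not_0_INR. lia.
Qed.

Lemma nat_above K : 0 <= K -> exists k : nat, K < INR k.
Proof.
  intros HK. destruct (archimed K) as [A _]. exists (Z.to_nat (up K)).
  rewrite INR_IZR_INZ, Z2Nat.id; [lra|].
  apply le_IZR. lra.
Qed.

Lemma powbound th b p q n : 0 < th -> (1 <= q)%Z ->
  Rabs (th - IZR p / IZR q) <= / IZR q ^ n ->
  Rabs (th ^ b - (IZR p / IZR q) ^ b) <= INR b * (th + 1) ^ b * / IZR q ^ n.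
Proof.
  intros Hth Hq Hb.
  assert (HqR : 1 <= IZR q) by (apply IZR_le; lia).
  assert (Hle1 : / IZR q ^ n <= 1).
  { rewrite <- Rinv_1. apply Rinv_le_contravar; [lra|apply pow_R1_Rle; lra]. }
  assert (Hw : Rabs (IZR p / IZR q) <= th + 1).
  { replace (IZR p / IZR q) with (th - (th - IZR p / IZR q)) by ring.
    eapply Rle_trans; [apply Rabs_triang|]. rewrite Rabs_Ropp, Rabs_right by lra. lra. }
  eapply Rle_trans; [apply (powdiff b th (IZR p / IZR q) (th + 1)); try lra|].
  - rewrite Rabs_right; lra.
  - apply Rmult_le_compat_l; [|exact Hb].
    apply Rmult_le_pos; [apply pos_INR|apply pow_le; lra].
Qed.

Lemma x_irr th b : Liouville th -> 0 < th -> (1 <= b)%nat -> irrational (th ^ b).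
Proof.
  intros HL Hth Hb u v Hv Heq.
  assert (HvR : IZR v <> 0) by (apply not_0_IZR; auto).
  set (C := INR b * (th + 1) ^ b).
  assert (HC : 0 <= C) by (apply Rmult_le_pos; [apply pos_INR|apply pow_le; lra]).
  destruct (nat_above (C * Rabs (IZR v))) as [k Hk].
  { apply Rmult_le_pos; [auto|apply Rabs_pos]. }
  destruct (approx th HL (b + k) ltac:(lia)) as (p & q & Hq & Hg & Happ).
  assert (HqR : 2 <= IZR q) by (apply IZR_le; lia).
  pose proof (powbound th b p q (b + k) Hth ltac:(lia) Happ) as Hpb. fold C in Hpb.
  set (w := IZR p / IZR q) in *.
  set (D := (u * q ^ Z.of_nat b - v * p ^ Z.of_nat b)%Z).
  assert (Hqb : 0 < IZR q ^ b) by (apply pow_lt; lra).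
  assert (HD : IZR D = IZR v * IZR q ^ b * (th ^ b - w ^ b)).
  { unfold D. rewrite minus_IZR, !mult_IZR, <- !pow_IZR.
    assert (IZR u = th ^ b * IZR v) by (rewrite Heq; field; auto).
    rewrite H. unfold w, Rdiv. rewrite Rpow_mult_distr, pow_inv. field. lra. }
  destruct (Z.eq_dec D 0) as [D0|D0].
  - rewrite D0 in HD.
    assert (E : th ^ b = w ^ b).
    { assert (IZR v * IZR q ^ b <> 0) by (apply Rmult_integral_contrapositive; split; lra).
      simpl in HD. symmetry in HD. apply Rmult_integral in HD. destruct HD; [contradiction|lra]. }
    assert (E' : th ^ b = Rabs w ^ b) by (rewrite RPow_abs, <- E, Rabs_right; [reflexivity|apply Rle_ge, pow_le; lra]).
    assert (Ew : Rabs w = th).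
    { destruct (Rtotal_order (Rabs w) th) as [L|[L|L]]; auto.
      - pose proof (pow_lt_base (Rabs w) th b (conj (Rabs_pos w) L) Hb). lra.
      - pose proof (pow_lt_base th (Rabs w) b (conj (Rlt_le _ _ Hth) L) Hb). lra. }
    destruct HL as [Hirr _].
    assert (Hq0 : q <> 0%Z) by lia.
    destruct (Rcase_abs w).
    + rewrite Rabs_left in Ew by auto. apply (Hirr (- p)%Z q Hq0).
      rewrite opp_IZR. rewrite <- Ew. unfold w. field. lra.
    + rewrite Rabs_right in Ew by auto. apply (Hirr p q Hq0). rewrite <- Ew. reflexivity.
  - assert (H1 : 1 <= Rabs (IZR D)) by (rewrite <- abs_IZR; apply IZR_le; lia).
    rewrite HD, !Rabs_mult, (Rabs_right (IZR q ^ b)) in H1 by lra.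
    assert (Hqn : IZR q ^ (b + k) = IZR q ^ b * IZR q ^ k) by apply pow_add.
    assert (Hqk : 2 ^ k <= IZR q ^ k) by (apply pow_incr; lra).
    pose proof (pow2ge k).
    assert (H2k : 0 < 2 ^ k) by (apply pow_lt; lra).
    assert (Hrest : Rabs (IZR v) * IZR q ^ b * Rabs (th ^ b - w ^ b) <= C * Rabs (IZR v) / IZR q ^ k).
    { rewrite Hqn in Hpb. 
      replace (C * Rabs (IZR v) / IZR q ^ k) with (Rabs (IZR v) * IZR q ^ b * (C * / (IZR q ^ b * IZR q ^ k))).
      - apply Rmult_le_compat_l; [|exact Hpb]. apply Rmult_le_pos; [apply Rabs_pos|lra].
      - field. split; lra. }
    assert (C * Rabs (IZR v) / IZR q ^ k <= C * Rabs (IZR v) / 2 ^ k).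
    { unfold Rdiv. apply Rmult_le_compat_l; [apply Rmult_le_pos; [auto|apply Rabs_pos]|].
      apply Rinv_le_contravar; auto. }
    assert (C * Rabs (IZR v) / 2 ^ k < 1).
    { apply (Rmult_lt_reg_r (2 ^ k)); auto. unfold Rdiv. rewrite Rmult_assoc, Rinv_l by lra. lra. }
    lra.
Qed.

Theorem lemma6p4 (a : Z) (b : nat) (zeta : R) :
  (1 <= b)%nat ->
  Z.gcd a (Z.of_nat b) = 1%Z ->
  0 < zeta ->
  Liouville zeta ->
  Liouville (Rpower zeta (IZR a / INR b)) ->
  (forall eta : R, 0 < eta ->
     exists p q : Z, (1 <= q)%Z /\ Z.gcd p q = 1%Z /\
       Rabs (IZR q ^ b * powerRZ zeta a - IZR p ^ b) <= Rpower (IZR q) (- eta))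
  /\
  (forall eta : R, INR b < eta ->
     exists Q : Z, forall p q : Z,
       (1 <= q)%Z -> (Q <= q)%Z -> Z.gcd p q = 1%Z ->
       Rabs (IZR q ^ b * powerRZ zeta a - IZR p ^ b) <= Rpower (IZR q) (- eta) ->
       is_convergent (powerRZ zeta a) (IZR p ^ b / IZR q ^ b)).
Proof.
  intros Hb _ Hz _ HL.
  set (th := Rpower zeta (IZR a / INR b)) in *.
  assert (Hth : 0 < th) by (unfold th, Rpower; apply exp_pos).
  assert (Ex : powerRZ zeta a = th ^ b) by (unfold th; rewrite theta_pow; auto).
  rewrite Ex. split.
  - intros eta Heta.
    set (C := INR b * (th + 1) ^ b).
    assert (HC : 0 <= C) by (apply Rmult_le_pos; [apply pos_INR|apply pow_le; lra]).
    destruct (nat_above eta) as [m Hm]; [lra|].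
    destruct (nat_above C HC) as [k Hk].
    destruct (approx th HL (b + m + k) ltac:(lia)) as (p & q & Hq & Hg & Happ).
    exists p, q. split; [lia|split; [auto|]].
    assert (HqR : 2 <= IZR q) by (apply IZR_le; lia).
    pose proof (powbound th b p q (b + m + k) Hth ltac:(lia) Happ) as Hpb. fold C in Hpb.
    assert (Hqb : 0 < IZR q ^ b) by (apply pow_lt; lra).
    assert (Hqm : 0 < IZR q ^ m) by (apply pow_lt; lra).
    assert (Hqk : 0 < IZR q ^ k) by (apply pow_lt; lra).
    replace (IZR q ^ b * th ^ b - IZR p ^ b) with (IZR q ^ b * (th ^ b - (IZR p / IZR q) ^ b)).
    2:{ unfold Rdiv. rewrite Rpow_mult_distr, pow_inv. field. lra. }
    rewrite Rabs_mult, Rabs_right by lra.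
    rewrite !pow_add in Hpb.
    assert (H1 : IZR q ^ b * Rabs (th ^ b - (IZR p / IZR q) ^ b) <= C / IZR q ^ k * / IZR q ^ m).
    { replace (C / IZR q ^ k * / IZR q ^ m) with (IZR q ^ b * (C * / (IZR q ^ b * IZR q ^ m * IZR q ^ k)))
        by (field; repeat split; lra).
      apply Rmult_le_compat_l; lra. }
    assert (H2 : C / IZR q ^ k <= 1).
    { pose proof (pow2ge k). assert (2 ^ k <= IZR q ^ k) by (apply pow_incr; lra).
      apply (Rmult_le_reg_r (IZR q ^ k)); auto. unfold Rdiv.
      rewrite Rmult_assoc, Rinv_l by lra. lra. }
    assert (H3 : / IZR q ^ m <= Rpower (IZR q) (- eta)).
    { rewrite Rpower_Ropp. apply Rinv_le_contravar.
      - unfold Rpower; apply exp_pos.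
      - rewrite <- Rpower_pow by lra. apply Rle_Rpower; lra. }
    assert (Hiq : 0 < / IZR q ^ m) by (apply Rinv_0_lt_compat; lra).
    assert (C / IZR q ^ k * / IZR q ^ m <= / IZR q ^ m).
    { rewrite <- (Rmult_1_l (/ IZR q ^ m)) at 2. apply Rmult_le_compat_r; lra. }
    lra.
  - intros eta Heta.
    assert (Hirr : irrational (th ^ b)) by (apply x_irr; auto).
    set (t := ln 2 / (eta - INR b)).
    exists (up (exp t)). intros p q Hq HQ _ Hineq.
    destruct (archimed (exp t)) as [A _].
    assert (HQR : IZR (up (exp t)) <= IZR q) by (apply IZR_le; auto).
    assert (HqR : 1 <= IZR q) by (apply IZR_le; auto).
    assert (Hs : (1 <= q ^ Z.of_nat b)%Z).
    { assert (0 < q ^ Z.of_nat b)%Z by (apply Z.pow_pos_nonneg; lia). lia. }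
    destruct (legendre (th ^ b) Hirr (p ^ Z.of_nat b) (q ^ Z.of_nat b) Hs) as [n Hn].
    + rewrite <- !pow_IZR.
      assert (Hlnq : t < ln (IZR q)).
      { rewrite <- (ln_exp t). apply ln_increasing; [apply exp_pos|lra]. }
      assert (Hln2 : ln 2 < (eta - INR b) * ln (IZR q)).
      { replace (ln 2) with ((eta - INR b) * t) by (unfold t; field; lra).
        apply Rmult_lt_compat_l; lra. }
      assert (Hpw : IZR q ^ b * Rpower (IZR q) (- eta) < / 2).
      { rewrite <- Rpower_pow by lra. rewrite <- Rpower_plus. unfold Rpower.
        rewrite <- (exp_ln 2) by lra. rewrite <- exp_Ropp. apply exp_increasing. nra. }
      assert (0 < IZR q ^ b) by (apply pow_lt; lra).
      assert (IZR q ^ b * Rabs (IZR q ^ b * th ^ b - IZR p ^ b) <= IZR q ^ b * Rpower (IZR q) (- eta))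
        by (apply Rmult_le_compat_l; lra).
      lra.
    + exists n. rewrite !pow_IZR. exact Hn.
Qed.
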